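(* Let $(X,\mu)$ be a measure space with $\mu$ not identically zero. For $i=1,\dots,n$ let $1<p_i<\infty$ with $\sum_{i=1}^n p_i^{-1}=1$, and let $0\le f_i\in L^{p_i}(\mu)$ with $\|f_i\|_{p_i}>0$. Let $p_{\min}^{-1}=\min\{p_1^{-1},\dots,p_n^{-1}\}$, $p_{\max}^{-1}=\max\{p_1^{-1},\dots,p_n^{-1}\}$, and $$R:=\frac{\int\prod_{i=1}^n f_i^{p_i/n}\,d\mu}{\prod_{i=1}^n\|f_i\|_{p_i}^{p_i/n}}.$$ Then $$\prod_{i=1}^n\|f_i\|_{p_i}\left(1-np^{-1}_{\max}(1-R)\right)\le\Big\|\prod_{i=1}^n f_i\Big\|_1\le\prod_{i=1}^n\|f_i\|_{p_i}\left(1-np^{-1}_{\min}(1-R)\right).$$ *)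

(* Defs.v *)
From HB Require Import structures.
From mathcomp Require Import all_boot all_order all_algebra.
From mathcomp Require Import all_classical all_reals all_analysis.
Set Implicit Arguments. Unset Strict Implicit. Unset Printing Implicit Defensive.
Import Order.TTheory GRing.Theory Num.Theory.
Import numFieldNormedType.Exports.

Local Open Scope ring_scope.

(* p_min^{-1} = min_i p_i^{-1}.  The neutral element 1 is harmless since every
   p_i^{-1} < 1 under the hypotheses (and n >= 1 is forced by sum p_i^{-1} = 1). *)
Definition pinv_min {R : realType} (n : nat) (p : 'I_n -> R) : R :=
  \big[Num.min/1]_(i < n) (p i)^-1.
(* p_max^{-1} = max_i p_i^{-1}; neutral element 0 is harmless since p_i^{-1} > 0. *)
Definition pinv_max {R : realType} (n : nat) (p : 'I_n -> R) : R :=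
  \big[Num.max/0]_(i < n) (p i)^-1.

(* Main.v *)
Require Import Defs.
From HB Require Import structures.
From mathcomp Require Import all_boot all_order all_algebra.
From mathcomp Require Import all_classical all_reals all_analysis.
From mathcomp Require Import measurable_realfun.
From mathcomp Require Import ring lra.
Import Order.TTheory GRing.Theory Num.Theory.
Import numFieldNormedType.Exports.
Local Open Scope classical_set_scope.
Local Open Scope ring_scope.
Section amgm.
Variable R : realType.

Lemma ln_le_sub1 (x : R) : 0 < x -> ln x <= x - 1.
Proof.
move=> x0; have := @le_ln1Dx R (x - 1); rewrite addrCA subrr addr0; apply; lra.
Qed.

Lemma amgm (I : finType) (w a : I -> R) :
  (forall i, 0 <= w i) -> (forall i, 0 <= a i) -> \sum_i w i = 1 ->
  \prod_i a i `^ w i <= \sum_i w i * a i.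
Proof.
move=> w0 a0 w1.
have S0 : 0 <= \sum_i w i * a i by apply: sumr_ge0 => i _; exact: mulr_ge0.
case: (boolP [exists i, (w i != 0) && (a i == 0)]).
  case/existsP => i /andP[wi ai].
  by rewrite (bigD1 i) //= (eqP ai) powR0 // mul0r.
rewrite negb_exists => /forallP H.
have Hi i : w i = 0 \/ 0 < a i.
  have := H i; case: eqP => [->|_] /=; first by left.
  by rewrite lt0r a0 andbT => ->; right.
set A := \sum_i w i * a i.
have [i wi] : exists i, w i != 0.
  apply/existsP; apply: contraT; rewrite negb_exists => /forallP H0.
  move: w1; rewrite big1 => [/eqP|j _]; first by rewrite eq_sym oner_eq0.
  by have := H0 j; rewrite negbK => /eqP.
have A0 : 0 < A.
  have ai : 0 < a i by case: (Hi i) => // wi0; rewrite wi0 eqxx in wi.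
  apply: (@lt_le_trans _ _ (w i * a i)).
    by rewrite mulr_gt0 // lt0r wi w0.
  rewrite /A (bigD1 i) //= lerDl; apply: sumr_ge0 => j _; exact: mulr_ge0.
have E : \prod_i a i `^ w i = expR (\sum_i w i * ln (a i)).
  rewrite expR_sum; apply: eq_bigr => j _; case: (Hi j) => [->|aj].
    by rewrite powRr0 mul0r expR0.
  by rewrite /powR (gt_eqF aj).
rewrite E -[leRHS](@lnK R A) ?posrE // ler_expR.
apply: (@le_trans _ _ (\sum_i (w i * (ln A - 1) + w i * a i / A))).
  apply: ler_sum => j _; case: (Hi j) => [->|aj]; first by rewrite !mul0r add0r.
  rewrite -mulrA -mulrDr ler_wpM2l //.
  have := ln_le_sub1 _ (divr_gt0 aj A0); rewrite ln_div ?posrE //; lra.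
rewrite big_split /= -mulr_suml -mulr_suml w1 mul1r -/A divff ?gt_eqF //; lra.
Qed.

Lemma amgm_ext n (w a : 'I_n -> R) v b :
  (forall i, 0 <= w i) -> (forall i, 0 <= a i) -> 0 <= v -> 0 <= b ->
  \sum_i w i + v = 1 ->
  \prod_i a i `^ w i * b `^ v <= \sum_i w i * a i + v * b.
Proof.
move=> w0 a0 v0 b0 s1.
pose W (i : 'I_n.+1) := if unlift ord_max i is Some j then w j else v.
pose A (i : 'I_n.+1) := if unlift ord_max i is Some j then a j else b.
have e (i : 'I_n) : widen_ord (leqnSn n) i = lift ord_max i.
  by apply: val_inj; rewrite /= /bump leqNgt ltn_ord.
have K i : unlift ord_max (widen_ord (leqnSn n) i) = Some i by rewrite e liftK.
have E1 : \sum_(i<n) W (widen_ord (leqnSn n) i) = \sum_i w i.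
  by apply: eq_bigr => i _; rewrite /W K.
have E2 : \sum_(i<n) W (widen_ord (leqnSn n) i) * A (widen_ord (leqnSn n) i)
   = \sum_i w i * a i.
  by apply: eq_bigr => i _; rewrite /W /A K.
have E3 : \prod_(i<n) A (widen_ord (leqnSn n) i) `^ W (widen_ord (leqnSn n) i)
   = \prod_i a i `^ w i.
  by apply: eq_bigr => i _; rewrite /W /A K.
have Wm : W ord_max = v by rewrite /W unlift_none.
have Am : A ord_max = b by rewrite /A unlift_none.
have := @amgm _ W A.
rewrite !big_ord_recr E1 E2 E3 Wm Am.
apply => [i|i|].
- by rewrite /W; case: unlift.
- by rewrite /A; case: unlift.
- by [].
Qed.

Lemma powRD_ge0 (x r s : R) : 0 <= r -> 0 <= s -> x `^ (r + s) = x `^ r * x `^ s.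
Proof.
move=> r0 s0; have [rs|rs] := eqVneq (r + s) 0.
  have -> : r = 0 by lra.
  have -> : s = 0 by lra.
  by rewrite addr0 !powRr0 mulr1.
by apply: powRD; rewrite (negPf rs).
Qed.

Lemma powR_prod n (a : 'I_n -> R) r : (forall i, 0 <= a i) ->
  (\prod_i a i) `^ r = \prod_i a i `^ r.
Proof.
move=> a0.
suff [] : (fun x y => 0 <= x /\ x `^ r = y) (\prod_i a i) (\prod_i a i `^ r) by [].
apply: (@big_ind2 R R (fun x y => 0 <= x /\ x `^ r = y)) => [|x1 x2 y1 y2 [x10 <-] [y10 <-]|i _].
- by rewrite powR1.
- by split; [exact: mulr_ge0 | rewrite powRM].
- by [].
Qed.

Lemma prod_powRD n (a : 'I_n -> R) (r s : 'I_n -> R) :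
  (forall i, 0 <= r i) -> (forall i, 0 <= s i) ->
  \prod_i a i `^ r i * \prod_i a i `^ s i = \prod_i a i `^ (r i + s i).
Proof.
move=> r0 s0; rewrite -big_split /=; apply: eq_bigr => i _.
by rewrite powRD_ge0.
Qed.

Lemma pw_upper n (w a : 'I_n -> R) m : (forall i, 0 <= a i) ->
  (forall i, m <= w i) -> 0 <= m -> \sum_i w i = 1 ->
  \prod_i a i `^ w i <=
  \sum_i (w i - m) * a i + n%:R * m * \prod_i a i `^ ((n%:R)^-1).
Proof.
move=> a0 mw m0 w1.
have n0 : n%:R != 0 :> R.
  case: n w a a0 mw w1 => [|k] w a _ _; last by rewrite pnatr_eq0.
  by rewrite big_ord0 => /eqP; rewrite eq_sym oner_eq0.
have G0 : 0 <= \prod_i a i `^ ((n%:R)^-1) by apply: prodr_ge0 => i _; exact: powR_ge0.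
have := @amgm_ext n (fun i => w i - m) a (n%:R * m) (\prod_i a i `^ ((n%:R)^-1)).
have -> : (\prod_i a i `^ ((n%:R)^-1)) `^ (n%:R * m) = \prod_i a i `^ m.
  rewrite powR_prod; last by move=> i; exact: powR_ge0.
  by apply: eq_bigr => i _; rewrite -powRrM mulrA mulVf // mul1r.
rewrite prod_powRD => [|i|i]; last 2 first.
- by rewrite subr_ge0.
- by [].
rewrite /=.
have -> : \prod_(i<n) a i `^ (w i - m + m) = \prod_i a i `^ w i.
  by apply: eq_bigr => i _; rewrite subrK.
apply => //.
- by move=> i; rewrite subr_ge0.
- by rewrite mulr_ge0 // ler0n.
- rewrite sumrB w1 sumr_const card_ord mulr_natl; lra.
Qed.

Lemma pw_lower n (w a : 'I_n -> R) M : (forall i, 0 <= a i) ->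
  (forall i, 0 <= w i) -> (forall i, w i <= M) -> 0 < M -> \sum_i w i = 1 ->
  n%:R * M * \prod_i a i `^ ((n%:R)^-1) <=
  \sum_i (M - w i) * a i + \prod_i a i `^ w i.
Proof.
move=> a0 w0 wM M0 w1.
have n0 : n%:R != 0 :> R.
  case: n w a a0 w0 wM w1 => [|k] w a _ _ _; last by rewrite pnatr_eq0.
  by rewrite big_ord0 => /eqP; rewrite eq_sym oner_eq0.
have nM0 : 0 < n%:R * M :> R.
  by rewrite mulr_gt0 // lt0r n0 ler0n.
set c := (n%:R * M)^-1.
have c0 : 0 < c by rewrite invr_gt0.
have P0 : 0 <= \prod_i a i `^ w i by apply: prodr_ge0 => i _; exact: powR_ge0.
have := @amgm_ext n (fun i => (M - w i) * c) a c (\prod_i a i `^ w i).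
rewrite powR_prod; last by move=> i; exact: powR_ge0.
have -> : \prod_i (a i `^ w i) `^ c = \prod_i a i `^ (w i * c).
  by apply: eq_bigr => i _; rewrite powRrM.
rewrite prod_powRD => [|i|i]; last 2 first.
- by rewrite mulr_ge0 // ?subr_ge0 // ltW.
- by rewrite mulr_ge0 // ltW.
rewrite /=.
have -> : \prod_(i<n) a i `^ ((M - w i) * c + w i * c) = \prod_i a i `^ ((n%:R)^-1).
  apply: eq_bigr => i _; congr (_ `^ _); transitivity (M * c); first by ring.
  rewrite /c invfM mulrCA.
  by rewrite divff ?gt_eqF // mulr1.
move=> H.
have H' : \prod_i a i `^ ((n%:R)^-1) <=
    c * (\sum_i (M - w i) * a i + \prod_i a i `^ w i).
  apply: le_trans (H _ _ _ _ _) _ => //.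
  - by move=> i; rewrite mulr_ge0 // ?subr_ge0 // ltW.
  - exact: ltW.
  - rewrite -mulr_suml sumrB w1 sumr_const card_ord -mulr_natl mulrBl mul1r.
    by rewrite /c divff ?gt_eqF // subrK.
  - rewrite mulrDr mulr_sumr; apply: lerD; last by rewrite mulrC.
    by apply: ler_sum => i _; rewrite mulrAC mulrC mulrA.
by rewrite -(@ler_pM2l _ c) // mulrA /c mulVf ?gt_eqF // mul1r.
Qed.
End amgm.

Section integ.
Context d (T : measurableType d) (R : realType) (mu : {measure set T -> \bar R}).

Lemma int_comb n (c : 'I_n -> R) (g : 'I_n -> T -> R) (k : R) (h : T -> R) :
  (forall i, 0 <= c i) -> 0 <= k -> (forall i, measurable_fun setT (g i)) ->
  measurable_fun setT h ->
  (forall i x, 0 <= g i x) -> (forall x, 0 <= h x) ->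
  (\int[mu]_x (\sum_i c i * g i x + k * h x)%:E =
   \sum_i (c i)%:E * \int[mu]_x (g i x)%:E + k%:E * \int[mu]_x (h x)%:E)%E.
Proof.
move=> c0 k0 mg mh g0 h0.
under eq_integral do rewrite EFinD.
rewrite ge0_integralD //; last 4 first.
- by move=> x _; rewrite lee_fin; apply: sumr_ge0 => i _; exact: mulr_ge0.
- apply/measurable_EFinP; apply: measurable_sum => i.
  by apply: measurable_funM => //; exact: measurable_cst.
- by move=> x _; rewrite lee_fin; exact: mulr_ge0.
- by apply/measurable_EFinP; apply: measurable_funM => //; exact: measurable_cst.
congr (_ + _)%E.
  under eq_integral do rewrite -sumEFin.
  rewrite ge0_integral_sum //; last 2 first.
  - move=> i; apply/measurable_EFinP.
    by apply: measurable_funM => //; exact: measurable_cst.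
  - by move=> i x _; rewrite lee_fin; exact: mulr_ge0.
  apply: eq_bigr => i _; under eq_integral do rewrite EFinM.
  rewrite ge0_integralZl //; first exact/measurable_EFinP.
  - by move=> x _; rewrite lee_fin.
  - by rewrite lee_fin.
under eq_integral do rewrite EFinM.
rewrite ge0_integralZl //; first exact/measurable_EFinP.
by move=> x _; rewrite lee_fin.
Qed.
End integ.
Lemma invpow (R : realType) (N r : R) : 0 < N -> (N^-1) `^ r = (N `^ r)^-1.
Proof.
move=> N0.
have H : N^-1 `^ r * N `^ r = 1.
  by rewrite -powRM ?invr_ge0 ?ltW // mulVf ?gt_eqF // powR1.
have Hn : N `^ r != 0 by rewrite gt_eqF // powR_gt0.
by rewrite -[LHS]mulr1 -(divff Hn) mulrA H mul1r.
Qed.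

Definition ord_inhab (R : realType) n (p : 'I_n -> R) : \sum_i p i = 1 -> 'I_n.
case: n p => [|k] p sp; last exact: ord0.
exfalso; move: sp; rewrite big_ord0 => /eqP; rewrite eq_sym oner_eq0.
by [].
Defined.

Theorem theorem3p3 (d : measure_display) (T : measurableType d) (R : realType)
  (mu : {measure set T -> \bar R}) (n : nat) (p : 'I_n -> R) (f : 'I_n -> T -> R) :
  (0 < mu [set: T])%E ->
  (forall i, 1 < p i) ->
  \sum_(i < n) (p i)^-1 = 1 ->
  (forall i, measurable_fun [set: T] (f i)) ->
  (forall i x, 0 <= f i x) ->
  (forall i, ('N[mu]_((p i)%:E)[EFin \o f i] < +oo)%E) ->
  (forall i, (0 < 'N[mu]_((p i)%:E)[EFin \o f i])%E) ->
  let N i := fine ('N[mu]_((p i)%:E)[EFin \o f i]) in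
  let Rq := fine (\int[mu]_x (\prod_(i < n) f i x `^ (p i / n%:R))%:E)
            / \prod_(i < n) N i `^ (p i / n%:R) in
  let prodN := \prod_(i < n) N i in
  let N1 := fine ('N[mu]_1[EFin \o (fun x => \prod_(i < n) f i x)]) in
  prodN * (1 - n%:R * pinv_max p * (1 - Rq)) <= N1 /\
  N1 <= prodN * (1 - n%:R * pinv_min p * (1 - Rq)).
Proof.
move=> mu0 p1 sp mf f0 Nfin Npos N Rq prodN N1.
have p0 i : 0 < p i by apply: lt_trans (p1 i).
have i0 : 'I_n := @ord_inhab R n (fun i => (p i)^-1) sp.
have nR0 : 0 < n%:R :> R by rewrite ltr0n (leq_ltn_trans (leq0n i0) (ltn_ord i0)).
have NE i : ('N[mu]_((p i)%:E)[EFin \o f i] = (N i)%:E)%E.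
  by rewrite fineK // ge0_fin_numE ?Nfin // Lnorm_ge0.
have N0 i : 0 < N i by rewrite -lte_fin -NE.
have Ip i : (\int[mu]_x ((f i x) `^ p i)%:E = ((N i) `^ p i)%:E)%E.
  rewrite -poweR_EFin -NE powR_Lnorm ?gt_eqF //; apply: eq_integral => x _.
  by rewrite -[(EFin \o f i) x]/((f i x)%:E) abse_EFin poweR_EFin ger0_norm.
set m := pinv_min p; set M := pinv_max p.
have mw i : m <= (p i)^-1 by exact: bigmin_le.
have m0 : 0 <= m.
  by apply: le_bigmin => // i _; rewrite invr_ge0 ltW.
have wM i : (p i)^-1 <= M by exact: le_bigmax.
have M0 : 0 < M.
  by apply: lt_le_trans (wM i0); rewrite invr_gt0.
pose a i x := (f i x / N i) `^ p i.
have a0 i x : 0 <= a i x by exact: powR_ge0.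
have ma i : measurable_fun setT (a i).
  apply: (measurableT_comp (measurable_powR _)).
  by apply: measurable_funM => //; exact: measurable_cst.
have aE i x : a i x = f i x `^ p i * (N i `^ p i)^-1.
  by rewrite /a powRM; [rewrite invpow | | rewrite invr_ge0 ltW].
have Ia i : (\int[mu]_x (a i x)%:E = 1%:E)%E.
  under eq_integral do rewrite aE EFinM.
  rewrite ge0_integralZr //; last 3 first.
  - by apply/measurable_EFinP; exact: (measurableT_comp (measurable_powR _)).
  - by move=> x _; rewrite lee_fin powR_ge0.
  - by rewrite lee_fin invr_ge0 powR_ge0.
  by rewrite Ip -EFinM divff // gt_eqF // powR_gt0.
have aw i x : a i x `^ (p i)^-1 = f i x / N i.
  by rewrite /a -powRrM mulfV ?gt_eqF // powRr1 // divr_ge0 // ltW.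
have an i x : a i x `^ ((n%:R)^-1) = f i x `^ (p i / n%:R) / N i `^ (p i / n%:R).
  by rewrite /a -powRrM powRM; [rewrite invpow | | rewrite invr_ge0 ltW].
set D := \prod_i N i `^ (p i / n%:R).
have D0 : 0 < D by apply: prodr_gt0 => i _; exact: powR_gt0.
have prodN0 : 0 < prodN by apply: prodr_gt0 => i _.
have PE x : \prod_i a i x `^ (p i)^-1 = (\prod_i f i x) / prodN.
  by under eq_bigr do rewrite aw; rewrite prodf_div.
have GE x : \prod_i a i x `^ ((n%:R)^-1) = (\prod_i f i x `^ (p i / n%:R)) / D.
  by under eq_bigr do rewrite an; rewrite prodf_div.
have mpF : measurable_fun setT (fun x => \prod_i f i x `^ (p i / n%:R)).
  by apply: measurable_prod => i _; exact: (measurableT_comp (measurable_powR _)).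
have mpf : measurable_fun setT (fun x => \prod_i f i x).
  by apply: measurable_prod => i _.
have sn : \sum_(i < n) (n%:R)^-1 = 1 :> R.
  by rewrite sumr_const card_ord -(mulr_natr ((n%:R)^-1)) mulVf // gt_eqF.
have IG1 : (\int[mu]_x ((\prod_i f i x `^ (p i / n%:R)) / D)%:E <= 1%:E)%E.
  apply: (@le_trans _ _ (\int[mu]_x (\sum_i (n%:R)^-1 * a i x + 0 * (fun _ : T => 0 : R) x)%:E)%E).
    apply: ge0_le_integral => //.
    - move=> x _; rewrite lee_fin; apply: divr_ge0; last exact: ltW.
      by apply: prodr_ge0 => i _; exact: powR_ge0.
    - by apply/measurable_EFinP; apply: measurable_funM => //; exact: measurable_cst.
    - apply/measurable_EFinP; apply: measurable_funD; last exact: measurable_cst.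
      apply: measurable_sum => i.
      by apply: measurable_funM => //; exact: measurable_cst.
    - move=> x _; rewrite lee_fin -GE mulr0 addr0.
      by apply: (@amgm _ _ (fun _ => (n%:R)^-1) (a ^~ x)) => // i /=.
  rewrite int_comb // mul0e adde0.
  under eq_bigr do rewrite Ia -EFinM mulr1.
  by rewrite sumEFin sn.
have IGE : (\int[mu]_x ((\prod_i f i x `^ (p i / n%:R)) / D)%:E =
    (\int[mu]_x (\prod_i f i x `^ (p i / n%:R))%:E) * (D^-1)%:E)%E.
  under eq_integral do rewrite EFinM.
  rewrite ge0_integralZr //; first exact/measurable_EFinP.
  - by move=> x _; rewrite lee_fin; apply: prodr_ge0 => i _; exact: powR_ge0.
  - by rewrite lee_fin invr_ge0 ltW.
have IF0 : (0 <= \int[mu]_x (\prod_i f i x `^ (p i / n%:R))%:E)%E.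
  by apply: integral_ge0 => x _; rewrite lee_fin; apply: prodr_ge0 => i _; exact: powR_ge0.
have IFfin : (\int[mu]_x (\prod_i f i x `^ (p i / n%:R))%:E)%E \is a fin_num.
  rewrite ge0_fin_numE //; move: IG1; rewrite IGE.
  case: (\int[mu]_x _)%E IF0 => [r _ _|_|//]; first exact: ltry.
  by rewrite gt0_mulye ?lte_fin ?invr_gt0 // leNgt ltry.
have IGR : (\int[mu]_x ((\prod_i f i x `^ (p i / n%:R)) / D)%:E = Rq%:E)%E.
  by rewrite IGE -(fineK IFfin) -EFinM.
have N1E : N1 = fine (\int[mu]_x (\prod_i f i x)%:E)%E.
  rewrite /N1 Lnorm1; congr fine; apply: eq_integral => x _.
  rewrite -[(EFin \o _) x]/((\prod_i f i x)%:E) abse_EFin ger0_norm //.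
  by apply: prodr_ge0 => i _.
have IPE : (\int[mu]_x ((\prod_i f i x) / prodN)%:E =
    (\int[mu]_x (\prod_i f i x)%:E) * (prodN^-1)%:E)%E.
  under eq_integral do rewrite EFinM.
  rewrite ge0_integralZr //; first exact/measurable_EFinP.
  - by move=> x _; rewrite lee_fin; apply: prodr_ge0 => i _.
  - by rewrite lee_fin invr_ge0 ltW.
have IP0 : (0 <= \int[mu]_x (\prod_i f i x)%:E)%E.
  by apply: integral_ge0 => x _; rewrite lee_fin; apply: prodr_ge0 => i _.
have U : (\int[mu]_x ((\prod_i f i x) / prodN)%:E <=
    \int[mu]_x (\sum_i ((p i)^-1 - m) * a i x +
       (n%:R * m) * ((\prod_i f i x `^ (p i / n%:R)) / D))%:E)%E.
  apply: ge0_le_integral => //.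
  - move=> x _; rewrite lee_fin; apply: divr_ge0; last exact: ltW.
    by apply: prodr_ge0 => i _.
  - by apply/measurable_EFinP; apply: measurable_funM => //; exact: measurable_cst.
  - apply/measurable_EFinP; apply: measurable_funD.
      apply: measurable_sum => i.
      by apply: measurable_funM => //; exact: measurable_cst.
    apply: measurable_funM; first exact: measurable_cst.
    by apply: measurable_funM => //; exact: measurable_cst.
  - move=> x _; rewrite lee_fin -PE -GE.
    by apply: pw_upper.
have mG : measurable_fun setT (fun x => (\prod_i f i x `^ (p i / n%:R)) / D).
  by apply: measurable_funM => //; exact: measurable_cst.
have G0 x : 0 <= (\prod_i f i x `^ (p i / n%:R)) / D.
  by apply: divr_ge0; [apply: prodr_ge0 => i _; exact: powR_ge0 | exact: ltW].
have cw i : 0 <= (p i)^-1 - m by rewrite subr_ge0.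
have nm0 : 0 <= n%:R * m by rewrite mulr_ge0 // ltW.
rewrite int_comb // IGR IPE in U.
have SI (c : 'I_n -> R) : (\sum_i (c i)%:E * \int[mu]_x (a i x)%:E = (\sum_i c i)%:E)%E.
  by rewrite -sumEFin; apply: eq_bigr => i _; rewrite Ia mule1.
rewrite SI -EFinM -EFinD in U.
have IPfin : (\int[mu]_x (\prod_i f i x)%:E)%E \is a fin_num.
  rewrite ge0_fin_numE //; move: U.
  case: (\int[mu]_x _)%E IP0 => [r _ _|_|//]; first exact: ltry.
  by rewrite gt0_mulye ?lte_fin ?invr_gt0 // leNgt ltry.
have IPR : (\int[mu]_x (\prod_i f i x)%:E = N1%:E)%E by rewrite N1E fineK.
rewrite IPR -EFinM lee_fin sumrB sp sumr_const card_ord in U.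
have sM : \sum_i (M - (p i)^-1) = n%:R * M - 1.
  by rewrite sumrB sp sumr_const card_ord mulr_natl.
have cM i : 0 <= M - (p i)^-1 by rewrite subr_ge0.
have nM0 : 0 <= n%:R * M by rewrite mulr_ge0 // ltW.
have L : (\int[mu]_x ((n%:R * M) * ((\prod_i f i x `^ (p i / n%:R)) / D))%:E <=
    \int[mu]_x (\sum_i (M - (p i)^-1) * a i x +
       1 * ((\prod_i f i x) / prodN))%:E)%E.
  apply: ge0_le_integral => //.
  - by move=> x _; rewrite lee_fin mulr_ge0.
  - by apply/measurable_EFinP; apply: measurable_funM => //; exact: measurable_cst.
  - apply/measurable_EFinP; apply: measurable_funD.
      apply: measurable_sum => i.
      by apply: measurable_funM => //; exact: measurable_cst.
    apply: measurable_funM; first exact: measurable_cst.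
    by apply: measurable_funM => //; exact: measurable_cst.
  - move=> x _; rewrite lee_fin -PE -GE mul1r.
    apply: (@pw_lower _ n (fun i => (p i)^-1) (a ^~ x) M) => // i /=.
    by rewrite invr_ge0 ltW.
have mP : measurable_fun setT (fun x => (\prod_i f i x) / prodN).
  by apply: measurable_funM => //; exact: measurable_cst.
have P0 x : 0 <= (\prod_i f i x) / prodN.
  by apply: divr_ge0; [apply: prodr_ge0 => i _ | exact: ltW].
have LG : (\int[mu]_x ((n%:R * M) * ((\prod_i f i x `^ (p i / n%:R)) / D))%:E
    = (n%:R * M)%:E * Rq%:E)%E.
  under eq_integral do rewrite EFinM.
  rewrite ge0_integralZl //; first by rewrite IGR.
  - exact/measurable_EFinP.
  - by move=> x _; rewrite lee_fin.
rewrite LG int_comb // IPE IPR SI sM mul1e -!EFinM -EFinD lee_fin in L.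
rewrite -(mulr_natl m) in U.
have NQ : N1 = prodN * (N1 / prodN) by rewrite mulrC divfK // gt_eqF.
move: U L; set Q := N1 / prodN => U L.
rewrite NQ; split; apply: ler_wpM2l; try exact: ltW.
- set t := n%:R * M in L *.
  have -> : 1 - t * (1 - Rq) = 1 - t + t * Rq by ring.
  set u := t * Rq in L *; rewrite -/Q; lra.
- set t := n%:R * m in U *.
  have -> : 1 - t * (1 - Rq) = 1 - t + t * Rq by ring.
  set u := t * Rq in U *; rewrite -/Q; lra.
Qed.
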